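(* Let $\pi\in\Pi$, $\alpha<\beta$ and $\delta>0$ with $d_\Xi(\Xi^\pi(\alpha),\Xi^\pi(\beta))\le\delta$, and let $\theta=d_k(\pi(\alpha),\pi(\beta))$ (so $\theta\le\delta$). Let $\tilde\pi\in\Pi$ be any strategy that coincides with $\pi$ on $[0,\beta]$ and on $[\beta,\beta+\theta]$ performs the canonical transition from $\pi(\beta)$ to $\pi(\alpha)$: each robot $r$ moves at unit speed along a fixed shortest path from $\pi_r(\beta)$ to $\pi_r(\alpha)$ and then waits there until time $\beta+\theta$. Then, with $\Gamma=[\alpha,\beta+\theta]$, $$\tilde\pi_r(\beta+\theta)=\pi_r(\alpha)\ \ \forall r,\qquad \sup_{t\in\Gamma}M^{\tilde\pi}(t)\le\sup_{t\in[\alpha,\beta]}M^\pi(t)+\phi_{\max}\delta.$$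
   Context: Let $G=(V,E,A,\phi)$ be a finite connected undirected graph with node set $V$, edge set $E$, edge lengths $A:E\to\mathbb{R}_{>0}$, node weights $\phi:V\to\mathbb{R}_{>0}$, $\phi_{\max}=\max_v\phi(v)$; $|G|$ its metric graph with shortest-path metric $d$. Fix $k\ge1$ robots; $d_k(p,p')=\max_i d(p_i,p'_i)$; $\Pi=\{\pi\in C([0,\infty),|G|^k): d_k(\pi(t),\pi(t'))\le|t-t'|\}$. For $v\in V$, $t\ge0$: $\tau^\pi(v,t)=\sup\{t'\le t:\pi_r(t')=v\text{ for some }r\}$ if nonempty, else $0$; $L^\pi_v(t)=t-\tau^\pi(v,t)$; $M^\pi(t)=\max_v\phi(v)L^\pi_v(t)$. Joint state $\Xi^\pi(t)=(\pi(t),(L^\pi_v(t))_{v\in V})$ with metric $d_\Xi((p,L),(p',L'))=\max\{d_k(p,p'),\max_v|L_v-L'_v|\}$. *)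

(* Defs.v *)
From HB Require Import structures.
From mathcomp Require Import all_boot all_order all_algebra.
From mathcomp Require Export boolp classical_sets reals set_interval.
Set Implicit Arguments. Unset Strict Implicit. Unset Printing Implicit Defensive.
Import Order.TTheory GRing.Theory Num.Theory.
Local Open Scope ring_scope.
Local Open Scope classical_set_scope.

(* Points of the metric graph |G|: a node, or an interior point of an edge e at
   distance s from the first endpoint (ends e).1 (valid iff 0 < s < A e).
   With this normal form, equality of points is Leibniz equality. *)
Inductive mpoint (R V E : Type) := PV of V | PE of E & R.
Arguments PV {R V E}.
Arguments PE {R V E}.

Section MetricGraph.
Context {R : realType} {V E : finType}.
Variables (ends : E -> V * V) (A : E -> R).

Definition valid_point (p : mpoint R V E) : Prop :=
  match p with PV _ => True | PE e s => 0 < s < A e end.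

(* a walk from u to w: a list of oriented edges (true = traversed from
   (ends e).1 to (ends e).2) *)
Fixpoint walk_ok (u w : V) (s : seq (E * bool)) : Prop :=
  match s with
  | [::] => u = w
  | (e, b) :: s' =>
      (if b then (ends e).1 else (ends e).2) = u /\
      walk_ok (if b then (ends e).2 else (ends e).1) w s'
  end.

Definition walk_length (s : seq (E * bool)) : R := \sum_(x <- s) A x.1.

Definition connected_graph : Prop := forall u w : V, exists s, walk_ok u w s.

Definition node_dist (u w : V) : R :=
  inf [set l | exists s, walk_ok u w s /\ l = walk_length s].

(* the nodes through which a point can be left, with the corresponding offsets *)
Definition attach (p : mpoint R V E) : seq (V * R) :=
  match p with
  | PV v => [:: (v, 0)]
  | PE e s => [:: ((ends e).1, s); ((ends e).2, A e - s)]
  end.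

Definition mdist (p q : mpoint R V E) : R :=
  inf [set x | (exists e s s', p = PE e s /\ q = PE e s' /\ x = `|s - s'|) \/
               (exists a b, a \in attach p /\ b \in attach q /\
                            x = a.2 + node_dist a.1 b.1 + b.2)].

Definition dk (k : nat) (p p' : 'I_k -> mpoint R V E) : R :=
  \big[Num.max/0]_(i < k) mdist (p i) (p' i).

(* the class Pi: maps [0,oo) -> |G|^k, 1-Lipschitz for d_k (values for t < 0
   are irrelevant) *)
Definition is_strategy (k : nat) (pi : R -> 'I_k -> mpoint R V E) : Prop :=
  (forall t (r : 'I_k), 0 <= t -> valid_point (pi t r)) /\
  (forall t t', 0 <= t -> 0 <= t' -> dk (pi t) (pi t') <= `|t - t'|).

Definition last_visit (k : nat) (pi : R -> 'I_k -> mpoint R V E) (v : V) (t : R) : R :=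
  let S := [set t' | 0 <= t' <= t /\ exists r, pi t' r = PV v] in
  if `[< S !=set0 >] then sup S else 0.

Definition latency (k : nat) (pi : R -> 'I_k -> mpoint R V E) (v : V) (t : R) : R :=
  t - last_visit pi v t.

Definition Mcost (phi : V -> R) (k : nat) (pi : R -> 'I_k -> mpoint R V E) (t : R) : R :=
  \big[Num.max/0]_(v : V) (phi v * latency pi v t).

Definition dXi (k : nat) (pi : R -> 'I_k -> mpoint R V E) (a b : R) : R :=
  Num.max (dk (pi a) (pi b))
          (\big[Num.max/0]_(v : V) `|latency pi v a - latency pi v b|).

End MetricGraph.

Definition phimax {R : realType} {V : finType} (phi : V -> R) : R :=
  \big[Num.max/0]_(v : V) phi v.

(* Main.v *)
Require Import Defs.
From HB Require Import structures.
From mathcomp Require Import all_boot all_order all_algebra.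
From mathcomp Require Import boolp classical_sets reals set_interval.
From mathcomp Require Import ring lra.
Import Order.TTheory GRing.Theory Num.Theory.
Local Open Scope ring_scope.
Local Open Scope classical_set_scope.

Section Aux.
Set Implicit Arguments.
Context {R : realType} {V E : finType}.
Variables (ends : E -> V * V) (A : E -> R).

Lemma walk_cat u m w s1 s2 : walk_ok ends u m s1 -> walk_ok ends m w s2 ->
  walk_ok ends u w (s1 ++ s2).
Proof.
elim: s1 u => [|[e b] s1 IH] u /=; first by move=> ->.
by move=> [H1 H2] H3; split => //; exact: IH H2 H3.
Qed.

Definition revw (s : seq (E * bool)) := rev (map (fun x => (x.1, ~~ x.2)) s).

Lemma walk_rev u w s : walk_ok ends u w s -> walk_ok ends w u (revw s).
Proof.
elim: s u => [|[e b] s IH] u /=; first by move=> ->.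
move=> [Hu Hs]; rewrite /revw map_cons rev_cons -cats1.
apply: walk_cat (IH _ Hs) _.
by case: b Hu Hs => /= Hu Hs; split.
Qed.

Lemma walk_length_rev s : walk_length A (revw s) = walk_length A s.
Proof. by rewrite /walk_length /revw big_rev big_map. Qed.

Lemma node_dist_sym u w : node_dist ends A u w = node_dist ends A w u.
Proof.
rewrite /node_dist; congr inf; apply/seteqP; split => l [s [Hs ->]];
  exists (revw s); rewrite walk_length_rev; split => //; exact: walk_rev.
Qed.

Lemma mdist_sym p q : mdist ends A p q = mdist ends A q p.
Proof.
rewrite /mdist; congr inf; apply/seteqP; split => x
  [[e [s [s' [-> [-> ->]]]]]|[a [b [Ha [Hb ->]]]]].
- by left; exists e, s', s; rewrite distrC.
- right; exists b, a; split => //; split => //.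
  rewrite (node_dist_sym b.1 a.1); ring.
- by left; exists e, s', s; rewrite distrC.
- right; exists b, a; split => //; split => //.
  rewrite (node_dist_sym b.1 a.1); ring.
Qed.

Variable k : nat.
Implicit Types p q : R -> 'I_k -> mpoint R V E.

Lemma lv_ge0 p v t : 0 <= last_visit p v t.
Proof.
rewrite /last_visit; case: asboolP => // [[x Hx]].
have Hx0 : 0 <= x by case: Hx => /andP[].
apply: le_trans Hx0 _; apply: ub_le_sup => //.
by exists t => y [/andP[_ ?] _].
Qed.

Lemma lv_mono p v t t' : t <= t' -> last_visit p v t <= last_visit p v t'.
Proof.
move=> Htt'; rewrite {1}/last_visit; case: asboolP => [Hne|]; last by move=> _; exact: lv_ge0.
rewrite /last_visit; case: asboolP => [Hne'|Hn].
  apply: ge_sup => // y [/andP[H0 Hy] Hr]; apply: ub_le_sup.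
    by exists t' => z [/andP[_ ?] _].
  by split => //; rewrite H0 /= (le_trans Hy Htt').
exfalso; apply: Hn; case: Hne => y [/andP[H0 Hy] Hr].
by exists y; split => //; rewrite H0 /= (le_trans Hy Htt').
Qed.

Lemma lv_ext p q v t : (forall t', 0 <= t' <= t -> p t' = q t') ->
  last_visit p v t = last_visit q v t.
Proof.
move=> H; rewrite /last_visit.
suff -> : [set t' | 0 <= t' <= t /\ exists r, p t' r = PV v] =
          [set t' | 0 <= t' <= t /\ exists r, q t' r = PV v] by [].
apply/seteqP; split => x [Hx [r Hr]]; split => //; exists r.
  by rewrite -H.
by rewrite H.
Qed.

Lemma Mcost_ext (phi : V -> R) p q t : (forall t', 0 <= t' <= t -> p t' = q t') ->
  Mcost phi p t = Mcost phi q t.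
Proof.
move=> H; rewrite /Mcost; apply: eq_bigr => v _.
by rewrite /latency (@lv_ext p q v t H).
Qed.

Lemma Mcost_ge0 (phi : V -> R) p t : 0 <= Mcost phi p t.
Proof. exact: bigmax_ge_id. Qed.

End Aux.

Theorem mainTheorem13 (R : realType) (V E : finType)
  (ends : E -> V * V) (A : E -> R) (phi : V -> R) (k : nat)
  (HA : forall e, 0 < A e) (Hphi : forall v, 0 < phi v)
  (Hconn : connected_graph ends) (Hk : (1 <= k)%N)
  (pi pit : R -> 'I_k -> mpoint R V E) (alpha beta delta : R)
  (Hpi : is_strategy ends A pi)
  (Halpha : 0 <= alpha) (Hab : alpha < beta) (Hdelta : 0 < delta)
  (HXi : dXi ends A pi alpha beta <= delta)
  (Hpit : is_strategy ends A pit)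
  (Hcoin : forall t : R, 0 <= t <= beta -> pit t = pi t)
  (Htrans : forall r : 'I_k,
     let Dr := mdist ends A (pi beta r) (pi alpha r) in
     (forall t t', beta <= t <= beta + Dr -> beta <= t' <= beta + Dr ->
        mdist ends A (pit t r) (pit t' r) = `|t - t'|) /\
     (forall t : R, beta + Dr <= t <= beta + dk ends A (pi alpha) (pi beta) ->
        pit t r = pi alpha r)) :
  let theta := dk ends A (pi alpha) (pi beta) in
  (forall r : 'I_k, pit (beta + theta) r = pi alpha r) /\
  sup [set Mcost phi pit t | t in `[alpha, beta + theta]] <=
    sup [set Mcost phi pi t | t in `[alpha, beta]] + phimax phi * delta.
Proof.
move=> theta.
have th0 : 0 <= theta by exact: bigmax_ge_id.
have thd : theta <= delta.
  by apply: le_trans HXi; rewrite /dXi le_max lexx.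
have pm0 : 0 <= phimax phi by exact: bigmax_ge_id.
have phile v : phi v <= phimax phi by exact: le_bigmax.
split.
  move=> r; apply: (Htrans r).2; rewrite lexx andbT lerD2l mdist_sym.
  rewrite /theta /dk; exact: (le_bigmax _ (fun i => mdist ends A (pi alpha i) (pi beta i))).
set S := sup [set Mcost phi pi t | t in `[alpha, beta]].
have ext t : 0 <= t <= beta -> Mcost phi pit t = Mcost phi pi t.
  move=> /andP[H0 Ht]; apply: Mcost_ext => t' /andP[H0' Ht'].
  by apply: Hcoin; rewrite H0' (le_trans Ht' Ht).
have Sub t : alpha <= t <= beta -> Mcost phi pi t <= S.
  move=> Ht.
  have hub : has_ubound [set Mcost phi pi t | t in `[alpha, beta]].
    exists (phimax phi * beta) => y [x]; rewrite /= in_itv /= => /andP[Hax Hxb] <-.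
    apply: bigmax_le; first by apply: mulr_ge0 => //; lra.
    move=> v _; rewrite /latency.
    have := lv_ge0 pi v x; have := phile v; have := Hphi v; nra.
  have := ub_le_sup hub; rewrite /ubound /= => /(_ (Mcost phi pi t)); apply.
  by exists t => //; rewrite /= in_itv /=.
apply: ge_sup.
  by exists (Mcost phi pit alpha), alpha => //; rewrite /= in_itv /= lexx /=; lra.
move=> y [t]; rewrite /= in_itv /= => /andP[Hat Htb] <-.
have Hd : 0 <= phimax phi * delta by apply: mulr_ge0 => //; lra.
case: (lerP t beta) => Htbeta.
  rewrite ext; last by apply/andP; split; lra.
  have := Sub t; rewrite Hat Htbeta /= => /(_ isT); lra.
have HMb : Mcost phi pit beta <= S.
  rewrite ext; last by apply/andP; split; lra.
  by apply: Sub; rewrite lexx andbT; lra.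
apply: (@le_trans _ _ (Mcost phi pit beta + phimax phi * (t - beta))).
  apply: bigmax_le.
    have := Mcost_ge0 phi pit beta; have : 0 <= phimax phi * (t - beta).
      by apply: mulr_ge0 => //; lra.
    lra.
  move=> v _; rewrite /latency.
  have H1 : phi v * (beta - last_visit pit v beta) <= Mcost phi pit beta.
    exact: (le_bigmax _ (fun v => phi v * latency pit v beta)).
  have H2 := @lv_mono _ _ _ _ pit v beta t (ltW Htbeta).
  have Hp := Hphi v.
  have H3 : phi v * (t - last_visit pit v t) <= phi v * (t - last_visit pit v beta).
    by apply: ler_wpM2l; [exact: ltW|lra].
  have H4 : phi v * (t - beta) <= phimax phi * (t - beta).
    by apply: ler_wpM2r; [lra|exact: phile].
  have Eq1 : phi v * (t - last_visit pit v beta) =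
    phi v * (beta - last_visit pit v beta) + phi v * (t - beta) by ring.
  lra.
have : phimax phi * (t - beta) <= phimax phi * delta.
  by apply: ler_wpM2l => //; lra.
lra.
Qed.
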